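(* Let $p$ be an odd prime, let $G$ be a proper multiplicative subgroup of $\mathbb{F}_p^*$ with $|G|\ge 3$, and let $\xi,\mu\in\mathbb{F}_p^*$. Then: (1) for every $A\subseteq\mathbb{F}_p^*$, we have $A/A\neq (\xi G+\mu)\setminus\{0\}$; (2) for every $A\subseteq\mathbb{F}_p^*$, we have $A/A\neq \big((\xi G\cup\{0\})+\mu\big)\setminus\{0\}$.
   Context: $\mathbb{F}_p$ is the field with $p$ elements and $\mathbb{F}_p^*=\mathbb{F}_p\setminus\{0\}$. For $A\subseteq\mathbb{F}_p^*$, the ratio set is $A/A=\{a/b: a,b\in A\}$. For a set $S\subseteq\mathbb{F}_p$, $\xi S=\{\xi s: s\in S\}$ and $S+\mu=\{s+\mu: s\in S\}$. *)

(* Defs.v *)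
From mathcomp Require Import all_boot all_algebra.
Set Implicit Arguments. Unset Strict Implicit. Unset Printing Implicit Defensive.
Import GRing.Theory.
Local Open Scope ring_scope.

Definition Fstar (p : nat) : {set 'F_p} := [set x : 'F_p | x != 0].

Definition is_mult_subgroup (p : nat) (G : {set 'F_p}) : Prop :=
  [/\ G \subset Fstar p, (1 : 'F_p) \in G,
      (forall x y, x \in G -> y \in G -> x * y \in G)
    & (forall x, x \in G -> x^-1 \in G)].

Definition ratio_set (p : nat) (A : {set 'F_p}) : {set 'F_p} :=
  [set a / b | a in A, b in A].

Definition dil_shift (p : nat) (xi mu : 'F_p) (S : {set 'F_p}) : {set 'F_p} :=
  [set xi * s + mu | s in S].

(* Main.v *)
Require Import Defs.
From mathcomp Require Import all_boot all_algebra.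
From mathcomp Require Import ring zify.
Set Implicit Arguments. Unset Strict Implicit. Unset Printing Implicit Defensive.
Import GRing.Theory.
Local Open Scope ring_scope.

Lemma natF_neq0 (p : nat) (pr : prime p) (n : nat) :
  (0 < n)%N -> (n < p)%N -> (n%:R : 'F_p) != 0.
Proof. by move=> n0 np; rewrite -(dvdn_pcharf (pchar_Fp pr)) gtnNdvd. Qed.

Lemma natC2 (F : fieldType) n :
  2 * ('C(n.+2, 2))%:R = (n.+2)%:R * (n.+1)%:R :> F.
Proof.
by rewrite -natrM mulnC (bin_ffact n.+2 2) -natrM ffactnS ffactn1.
Qed.

Lemma natC3 (F : fieldType) n :
  6 * ('C(n.+3, 3))%:R = (n.+3)%:R * (n.+2)%:R * n.+1%:R :> F.
Proof.
by rewrite -natrM mulnC (bin_ffact n.+3 3) !ffactnS ffactn0 muln1 mulnA !natrM.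
Qed.

Lemma binsum (F : fieldType) (a x : F) n :
  \sum_(i < n.+1) 'C(n, i)%:R * a ^+ (n - i) * x ^+ i = (a + x) ^+ n.
Proof. by rewrite exprDn; apply: eq_bigr => i _; rewrite -mulrA mulr_natl. Qed.

Lemma binsumS (F : fieldType) (a x : F) n :
  \sum_(i < n.+1) 'C(n.+1, i.+1)%:R * a ^+ (n - i) * x ^+ i.+1
    = (a + x) ^+ n.+1 - a ^+ n.+1.
Proof.
rewrite -binsum [in RHS]big_ord_recl /= bin0 subn0 expr0 mulr1 mul1r addrC addKr.
by apply: eq_bigr => i _; rewrite /bump leq0n add1n subSS.
Qed.

Lemma Gpow (p : nat) (G : {set 'F_p}) : is_mult_subgroup G ->
  forall g, g \in G -> g ^+ #|G| = 1.
Proof.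
case=> GF G1 Gm Gi g gG.
have nz : forall x, x \in G -> x != 0.
  by move=> x xG; move/subsetP: GF => /(_ x xG); rewrite inE.
have g0 := nz g gG.
have im : [set g * x | x in G] = G.
  apply/eqP; rewrite eqEcard card_imset; last exact: mulfI.
  rewrite leqnn andbT; apply/subsetP => y /imsetP [x xG ->]; exact: Gm.
have P0 : \prod_(x in G) x != 0 by apply/prodf_neq0 => x /nz.
have : \prod_(x in G) (g * x) = \prod_(x in G) x.
  rewrite -{2}im big_imset //; move=> x y _ _; exact: mulfI.
rewrite big_split /= prodr_const => /eqP.
rewrite -{2}[\prod_(x in G) x]mul1r (inj_eq (mulIf P0)) => /eqP //.
Qed.

Lemma card_Fstar (p : nat) : prime p -> #|Fstar p| = p.-1.
Proof.
move=> pr; have -> : Fstar p = [set~ 0] by apply/setP => x; rewrite !inE.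
by rewrite cardsC1 card_Fp.
Qed.

Lemma ratio_inv (p : nat) (A : {set 'F_p}) x :
  x \in ratio_set A -> x^-1 \in ratio_set A.
Proof.
by case/imset2P => a b aA bA ->; rewrite invf_div; apply/imset2P; exists b a.
Qed.

Lemma ratio_one (p : nat) (A : {set 'F_p}) x : A \subset Fstar p ->
  x \in ratio_set A -> 1 \in ratio_set A.
Proof.
move=> AF /imset2P [a b aA bA _]; apply/imset2P; exists a a => //.
by rewrite mulfV //; move/subsetP: AF => /(_ a aA); rewrite inE.
Qed.
Lemma key (F : fieldType) (n : nat) (c : nat -> F) (s : seq F) :
  c n = 1 -> uniq s -> size s = n ->
  (forall x, x \in s -> x != 0) -> (forall x, x \in s -> x^-1 \in s) ->
  (forall x, x \in s -> \sum_(i < n.+1) c i * x ^+ i = 0) ->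
  forall j, (j <= n)%N -> c (n - j)%N = c 0%N * c j.
Proof.
move=> cn us ss s0 sV sR.
have rev0 : forall x, x \in s -> \sum_(i < n.+1) c (n - i)%N * x ^+ i = 0.
  move=> x xs.
  have x0 := s0 x xs.
  have E : forall i : 'I_n.+1, c (n - i)%N * x ^+ i =
      x ^+ n * (c (n - i)%N * x^-1 ^+ (n - i)%N).
    move=> i; rewrite exprVn.
    have -> : x ^+ n = x ^+ i * x ^+ (n - i)%N by rewrite -exprD subnKC // -ltnS.
    by rewrite mulrC -mulrA; congr (_ * _); rewrite mulrCA mulfV ?mulr1 // expf_neq0.
  rewrite (eq_bigr _ (fun i _ => E i)) -mulr_sumr.
  rewrite (reindex_inj rev_ord_inj) /=.
  rewrite (eq_bigr (fun j : 'I_n.+1 => c j * x^-1 ^+ j)); last by move=> j _; rewrite subSS subKn // -ltnS.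
  by rewrite sR ?mulr0 // sV.
set D := \poly_(i < n) (c (n - i)%N - c 0%N * c i).
have D0 : D = 0.
  apply: (roots_geq_poly_eq0 (rs := s)) => //; last by rewrite ss size_poly.
  apply/allP => x xs; rewrite /root horner_poly.
  have -> : \sum_(i < n) (c (n - i)%N - c 0%N * c i) * x ^+ i =
     (\sum_(i < n.+1) c (n - i)%N * x ^+ i) - c 0%N * (\sum_(i < n.+1) c i * x ^+ i).
    rewrite !big_ord_recr /= subnn cn mulrDr mul1r mulr_sumr opprD addrACA subrr addr0 -sumrB.
    by apply: eq_bigr => i _; rewrite mulrBl mulrA.
  by rewrite rev0 // sR // mulr0 subr0.
move=> j; rewrite leq_eqVlt => /orP [/eqP -> | jn].
  by rewrite subnn cn mulr1.
have := congr1 (fun P : {poly F} => P`_j) D0.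
by rewrite coef_poly jn coef0 => /eqP; rewrite subr_eq0 => /eqP.
Qed.
Lemma caseA (F : fieldType) (K : nat) (m lam c0 : F) : m != 0 -> lam != 0 ->
  (K.+3)%:R != 0 :> F -> ('C(K.+3,2))%:R != 0 :> F ->
  c0 = m^+K.+3 - lam ->
  (K.+3)%:R * m = c0 * ((K.+3)%:R * m ^+ K.+2) ->
  ('C(K.+3,2))%:R * m^+2 = c0 * ('C(K.+3,2)%:R * m ^+ K.+1) -> False.
Proof.
move=> m0 l0 k0 C0 ec0 R1 R2.
have h1 : c0 * m^+K.+1 = 1.
  apply: (@mulfI _ ((K.+3)%:R * m)); first by rewrite mulf_neq0.
  by rewrite mulr1 [RHS]R1 !exprS; ring.
have h2 : m^+2 = 1.
  have : 'C(K.+3,2)%:R * m^+2 = 'C(K.+3,2)%:R * (c0 * m^+K.+1) by rewrite R2; ring.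
  by rewrite h1 => /(mulfI C0).
have h3 : m ^+ (2 * K.+2) = 1 by rewrite exprM h2 expr1n.
move: h1; rewrite ec0 mulrBl -exprD.
have -> : (K.+3 + K.+1 = 2 * K.+2)%N by lia.
rewrite h3 => /eqP; rewrite subr_eq addrC -subr_eq subrr eq_sym mulf_eq0 (negbTE l0) /=.
by rewrite expf_eq0 (negbTE m0) andbF.
Qed.
Lemma caseB (F : fieldType) (m q k C2 C3 : F) : m != 0 -> q != 0 -> k != 0 ->
  k - 1 != 0 -> k - 3 != 0 -> k + 1 != 0 -> 2 != 0 :> F ->
  2 * C2 = k * (k - 1) -> 6 * C3 = k * (k - 1) * (k - 2) ->
  1 = (k * m^+2 * q) * (k * m^+2 * q) ->
  k * m = (k * m^+2 * q) * (C2 * (m * q)) ->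
  C2 * m^+2 = (k * m^+2 * q) * (C3 * q) -> False.
Proof.
move=> m0 q0 k0 k10 k30 k1 two hC2 hC3 R0 R1 R2.
have mq : m ^+ 2 * q ^+ 2 != 0 by rewrite mulf_neq0 // expf_neq0.
have s1 : C2 * (m ^+ 2 * q ^+ 2) = 1.
  apply: (@mulfI _ (k * m)); first by rewrite mulf_neq0.
  by rewrite mulr1 [RHS]R1; ring.
have s2 : C2 = k ^+ 2 * m ^+ 2.
  apply: (@mulIf _ (m ^+ 2 * q ^+ 2)) => //; cbv beta.
  by rewrite s1 R0; ring.
have s3 : C2 = k * C3 * q ^+ 2.
  apply: (@mulIf _ (m ^+ 2)); first by rewrite expf_neq0.
  cbv beta.
  by rewrite R2; ring.
have s4 : C2 ^+ 2 * m ^+ 2 = k * C3.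
  transitivity (C2 * m^+2 * (k * C3 * q ^+ 2)); first by rewrite -s3; ring.
  transitivity (k * C3 * (C2 * (m ^+ 2 * q ^+ 2))); first by ring.
  by rewrite s1 mulr1.
have s5 : C2 ^+ 3 = k ^+ 3 * C3.
  transitivity (C2 ^+ 2 * (k ^+ 2 * m ^+ 2)); first by rewrite -s2; ring.
  transitivity (k ^+ 2 * (C2 ^+ 2 * m ^+ 2)); first by ring.
  by rewrite s4; ring.
have : 48 * (C2 ^+ 3 - k ^+ 3 * C3) = 6 * (2 * C2) ^+ 3 - 8 * k ^+ 3 * (6 * C3) by ring.
rewrite s5 subrr mulr0 hC2 hC3.
have -> : 6 * (k * (k - 1)) ^+ 3 - 8 * k ^+ 3 * (k * (k - 1) * (k - 2)) =
   - (2 * k ^+ 3 * (k - 1) * (k - 3) * (k + 1)) by ring.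
move/eqP; rewrite eq_sym oppr_eq0 !mulf_eq0 (negbTE two) (negbTE k0) (negbTE k10) (negbTE k30) (negbTE k1).
by [].
Qed.

Lemma caseB0 (F : fieldType) (m : F) : m != 0 -> 3 != 0 :> F ->
  3 * m = (3 * m^+2) * (3 * m) -> 3 * m^+2 + 3 * m + 1 = 0 -> False.
Proof.
move=> m0 t0 R1 S.
have E1 : 3 * m ^+ 2 - 1 = 0.
  apply: (@mulfI _ (3 * m)); first by rewrite mulf_neq0.
  rewrite mulr0; transitivity (3 * m ^+ 2 * (3 * m) - 3 * m); first by ring.
  by rewrite -R1 subrr.
have : (-1 : F) = 3 * (m * ((3 * m^+2 + 3 * m + 1) - (3 * m ^+ 2 - 1)) - (3 * m ^+ 2 - 1))
    - 2 * ((3 * m^+2 + 3 * m + 1) - (3 * m ^+ 2 - 1)) by ring.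
rewrite S E1 !(subr0, mulr0, sub0r, oppr0) => /eqP; rewrite oppr_eq0 oner_eq0.
by [].
Qed.

Lemma caseC (F : fieldType) (m q lam C2 C3 : F) : m != 0 -> q != 0 -> lam != 0 ->
  C2 != 0 -> C3 != 0 ->
  1 = (m ^+ 4 * q - lam * m) * (m ^+ 4 * q - lam * m) ->
  C2 * m ^+ 2 = (m ^+ 4 * q - lam * m) * (C2 * (m ^+ 2 * q)) ->
  C3 * m ^+ 3 = (m ^+ 4 * q - lam * m) * (C3 * (m * q)) -> False.
Proof.
move=> m0 q0 l0 c20 c30; set c0 := (m ^+ 4 * q - lam * m) => R0 R2 R3.
have s1 : c0 * q = 1.
  apply: (@mulfI _ (C2 * m ^+ 2)); first by rewrite mulf_neq0 // expf_neq0.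
  by rewrite mulr1 [RHS]R2; ring.
have s2 : m ^+ 2 = 1.
  apply: (@mulfI _ (C3 * m)); first by rewrite mulf_neq0.
  transitivity (C3 * m ^+ 3); first by ring.
  rewrite R3; transitivity (C3 * m * (c0 * q)); first by ring.
  by rewrite s1.
have c00 : c0 != 0 by apply/eqP => c0e; move: s1; rewrite c0e mul0r => /eqP; rewrite eq_sym oner_eq0.
have s3 : c0 = q by apply: (mulfI c00); rewrite -R0 s1.
have : c0 = q - lam * m by rewrite /c0 -[4%N]/(2 * 2)%N exprM s2 expr1n mul1r.
rewrite s3 => /eqP; rewrite -subr_eq0 opprB addrC subrK. rewrite mulf_eq0 (negbTE l0) (negbTE m0).
by [].
Qed.

Lemma caseC0 (F : fieldType) (m lam : F) : m != 0 -> lam != 0 -> 2 != 0 :> F -> 3 != 0 :> F ->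
  4 * m = (m ^+ 4 - lam * m) * (4 * m ^+ 3 - lam) ->
  6 * m ^+ 2 = (m ^+ 4 - lam * m) * (6 * m ^+ 2) ->
  (m ^+ 4 - lam * m) + (4 * m ^+ 3 - lam) + 6 * m ^+ 2 + 4 * m + 1 = 0 -> False.
Proof.
move=> m0 l0 t0 h0 R1 R2 S.
have six : 6 * m ^+ 2 != 0 by rewrite mulf_neq0 ?expf_neq0 // (_ : 6 = 2 * 3) ?mulf_neq0 //; ring.
have c0 : m ^+ 4 - lam * m = 1 by apply: (mulIf six); rewrite mul1r -R2.
rewrite c0 mul1r in R1.
have hl : lam = 4 * m ^+ 3 - 4 * m by rewrite R1; ring.
have : 2 * ((3 * m + 1) * (m + 1)) = 0 by rewrite -S c0 hl; ring.
move/eqP; rewrite !mulf_eq0 (negbTE t0) /= => /orP [] /eqP e.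
  have : (81 : F) * 1 = - 3 * (3 * m) ^+ 4 + 36 * (3 * m) ^+ 2.
    transitivity (81 * (m ^+ 4 - lam * m)); first by rewrite c0.
    by rewrite hl; ring.
  rewrite (_ : 3 * m = -1); last by rewrite -(addrK 1 (3 * m)) e; ring.
  move=> /eqP; rewrite -subr_eq0.
  have -> : (81 : F) * 1 - (- 3 * (-1) ^+ 4 + 36 * (-1) ^+ 2) = 2 * 2 * 2 * 2 * 3 by ring.
  by rewrite !mulf_eq0 (negbTE t0) (negbTE h0).
have em : m = -1 by rewrite -(addrK 1 m) e; ring.
move: hl; rewrite em => /eqP; rewrite (_ : 4 * (-1) ^+ 3 - 4 * (-1) = 0 :> F); last by ring.
by rewrite (negbTE l0).
Qed.

Lemma caseD (F : fieldType) (m q k C2 C3 : F) : m != 0 -> q != 0 -> k != 0 ->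
  k + 1 != 0 -> 2 != 0 :> F ->
  2 * C2 = (k + 1) * k -> 6 * C3 = (k + 1) * k * (k - 1) ->
  1 = (k * m ^+ 3 * q) * (k * m ^+ 3 * q) ->
  (k + 1) * m = (k * m ^+ 3 * q) * (C2 * (m ^+ 2 * q)) ->
  C2 * m ^+ 2 = (k * m ^+ 3 * q) * (C3 * (m * q)) ->
  2 * m ^+ 2 = 1 /\ 3 * k = 4 * (k - 1).
Proof.
move=> m0 q0 k0 k1 t0 hC2 hC3 R0 R1 R2.
have s1 : k ^+ 2 * m ^+ 4 * q ^+ 2 = 2.
  apply: (@mulfI _ ((k + 1) * m)); first by rewrite mulf_neq0.
  symmetry; transitivity (2 * ((k + 1) * m)); first by ring.
  rewrite [X in 2 * X]R1.
  transitivity (k * m ^+ 3 * q * (2 * C2) * (m ^+ 2 * q)); first by ring.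
  by rewrite hC2; ring.
have s2 : 2 * m ^+ 2 = 1.
  transitivity (k ^+ 2 * m ^+ 4 * q ^+ 2 * m ^+ 2); first by rewrite s1.
  by rewrite [RHS]R0; ring.
split => //.
have s3 : k * (k - 1) * m ^+ 2 * q ^+ 2 = 3.
  apply: (@mulfI _ ((k + 1) * k * m ^+ 2)); first by rewrite !mulf_neq0 ?expf_neq0.
  symmetry; transitivity (3 * (2 * C2) * m ^+ 2); first by rewrite hC2; ring.
  transitivity (6 * (C2 * m ^+ 2)); first by ring.
  rewrite R2; transitivity (k * m ^+ 3 * q * (6 * C3) * (m * q)); first by ring.
  by rewrite hC3; ring.
have s4 : k ^+ 2 * m ^+ 2 * q ^+ 2 = 4.
  transitivity (k ^+ 2 * m ^+ 2 * q ^+ 2 * (2 * m ^+ 2)); first by rewrite s2 mulr1.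
  transitivity (2 * (k ^+ 2 * m ^+ 4 * q ^+ 2)); first by ring.
  by rewrite s1; ring.
transitivity (k * (k * (k - 1) * m ^+ 2 * q ^+ 2)); first by rewrite s3; ring.
transitivity ((k - 1) * (k ^+ 2 * m ^+ 2 * q ^+ 2)); first by ring.
by rewrite s4; ring.
Qed.

Lemma caseD1 (F : fieldType) (m : F) : 2 * m ^+ 2 = 1 ->
  4 * m ^+ 4 + 10 * m ^+ 3 + 10 * m ^+ 2 + 5 * m + 1 = 0 -> False.
Proof.
move=> s S.
have e : 10 * m + 7 = 0.
  transitivity ((4 * m ^+ 4 + 10 * m ^+ 3 + 10 * m ^+ 2 + 5 * m + 1)
     - (2 * m ^+ 2 - 1) * (2 * m ^+ 2 + 5 * m + 6)); first by ring.
  by rewrite S s subrr mul0r subr0.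
have : (1 : F) = (10 * m + 7) * (10 * m - 7) - 50 * (2 * m ^+ 2 - 1) by ring.
rewrite e s subrr mul0r mulr0 subr0 => /eqP; rewrite oner_eq0.
by [].
Qed.

Lemma from_set (F : finFieldType) (X : {set F}) n (c : nat -> F) :
  0 \notin X -> (forall x, x \in X -> x^-1 \in X) -> #|X| = n -> c n = 1 ->
  (forall x, x \in X -> \sum_(i < n.+1) c i * x ^+ i = 0) ->
  (forall j, (j <= n)%N -> c (n - j)%N = c 0%N * c j).
Proof.
move=> X0 XV Xn cn Xr; apply: (key (s := enum X)) => //.
- exact: enum_uniq.
- by rewrite -cardE.
- by move=> x; rewrite mem_enum => xX; apply/eqP => x0; rewrite -x0 xX in X0.
- by move=> x; rewrite !mem_enum; apply: XV.
- by move=> x; rewrite mem_enum; apply: Xr.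
Qed.

Lemma sum_at1 (F : fieldType) n (c : nat -> F) :
  \sum_(i < n) c i * 1 ^+ i = \sum_(i < n) c i.
Proof. by apply: eq_bigr => i _; rewrite expr1n mulr1. Qed.

Lemma expS2 (F : fieldType) (x : F) n : x ^+ n.+2 = x ^+ 2 * x ^+ n.
Proof. by rewrite -exprD. Qed.

Lemma natsub (F : fieldType) a b : (a + b)%:R - b%:R = a%:R :> F.
Proof. by rewrite natrD addrK. Qed.

Lemma Tfacts p (G : {set 'F_p}) xi mu : is_mult_subgroup G -> xi != 0 ->
  [/\ #|dil_shift xi mu G| = #|G|,
      forall t, t \in dil_shift xi mu G -> (- mu + t) ^+ #|G| = xi ^+ #|G|,
      mu \notin dil_shift xi mu G &
      (0 \in dil_shift xi mu G -> (- mu) ^+ #|G| = xi ^+ #|G|)].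
Proof.
move=> HG xi0; have Gp := Gpow HG; case: HG => GF _ _ _.
have nz : forall x, x \in G -> x != 0.
  by move=> x xG; move/subsetP: GF => /(_ x xG); rewrite inE.
split.
- by rewrite card_imset // => a b /addIr /(mulfI xi0).
- by move=> t /imsetP [g gG ->]; rewrite addrC addrK exprMn (Gp g gG) mulr1.
- apply/imsetP => [[g gG /eqP]]; rewrite eq_sym -subr_eq0 addrK mulf_eq0.
  by rewrite (negbTE xi0) (negbTE (nz g gG)).
- case/imsetP => g gG e.
  have E : xi * g = - mu by apply/eqP; rewrite -addr_eq0 -e.
  by rewrite -E exprMn (Gp g gG) mulr1.
Qed.

Lemma part1B p (X T : {set 'F_p}) (m : 'F_p) K : prime p -> (K.+4 < p)%N -> m != 0 ->
  X = T :\ 0 -> 0 \in T -> #|T| = K.+3 ->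
  (forall t, t \in T -> (m + t) ^+ K.+3 = m ^+ K.+3) ->
  1 \in X -> (forall x, x \in X -> x^-1 \in X) -> False.
Proof.
move=> pr Kp m0 -> T0 Tc Tr X1 XV.
have nF := natF_neq0 pr.
have X0 : 0 \notin T :\ 0 by rewrite setD11.
have cX : #|T :\ 0| = K.+2.
  by move: Tc; rewrite (cardsD1 0) T0 add1n => [[]].
pose c i := 'C(K.+3, i.+1)%:R * m ^+ (K.+2 - i) : 'F_p.
have cn : c K.+2 = 1 by rewrite /c binn subnn expr0 mulr1.
have roots : forall x, x \in T :\ 0 -> \sum_(i < K.+3) c i * x ^+ i = 0.
  move=> x; rewrite !inE => /andP [x0 xT].
  apply: (mulfI x0); rewrite mulr0 mulr_sumr.
  transitivity (\sum_(i < K.+3) 'C(K.+3, i.+1)%:R * m ^+ (K.+2 - i) * x ^+ i.+1).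
    by apply: eq_bigr => i _; rewrite /c exprS; ring.
  by rewrite binsumS Tr // subrr.
have rel := from_set X0 XV cX cn roots.
have R0 := rel 0%N isT; have R1 := rel 1%N isT; have R2 := rel 2%N isT.
have s1 := roots 1 X1; rewrite sum_at1 in s1.
have e0 : c 0%N = (K.+3)%:R * (m ^+ 2 * m ^+ K) by rewrite /c bin1 subn0 expS2.
rewrite [c (K.+2 - 0)%N]cn e0 in R0.
have e1 : c (K.+2 - 1)%N = (K.+3)%:R * m.
  by rewrite /c /= binSn (_ : (K.+2 - K.+1 = 1)%N) ?expr1 //; clear -Kp; lia.
have e1' : c 1%N = 'C(K.+3, 2)%:R * (m * m ^+ K) by rewrite /c /= subn1 /= exprS.
rewrite e1 e1' e0 in R1.
have e2 : c (K.+2 - 2)%N = 'C(K.+3, 2)%:R * m ^+ 2.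
  rewrite /c !subSS subn0 (_ : (K.+2 - K = 2)%N); last by clear -Kp; lia.
  by rewrite -(@bin_sub K.+3 2).
have e2' : c 2%N = 'C(K.+3, 3)%:R * m ^+ K by rewrite /c /= subn2.
rewrite e2 e2' e0 in R2.
case: K Kp c Tc Tr cX cn roots rel R0 R1 R2 s1 e0 e1 e1' e2 e2' => [|K] Kp c Tc Tr cX cn roots rel R0 R1 R2 s1 e0 e1 e1' e2 e2'.
  apply: (@caseB0 _ m) => //; first by apply: (nF 3%N) => //; clear -Kp; lia.
    by move: R1; rewrite expr0 !mulr1.
  move: s1; rewrite !big_ord_recl big_ord0 /= e0 /bump /= e1' e2' (_ : 'C(3,2) = 3)%N // (_ : 'C(3,3) = 1)%N //.
  by move=> <-; ring.
apply: (@caseB _ m (m ^+ K.+1) (K.+4)%:R 'C(K.+4, 2)%:R 'C(K.+4, 3)%:R) => //.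
- by rewrite expf_neq0.
- by apply: nF => //; clear -Kp; lia.
- by rewrite -natr1 addrK; apply: nF => //; clear -Kp; lia.
- by rewrite -[K.+4]addn3 natsub; apply: nF => //; clear -Kp; lia.
- by rewrite natr1; apply: nF => //; clear -Kp; lia.
- by apply: (nF 2%N) => //; clear -Kp; lia.
- by rewrite natC2 -natr1 addrK.
- rewrite natC3 -natr1 addrK; congr (_ * _).
  by rewrite natr1 -[K.+4]addn2 natsub.
- by rewrite [LHS]R0; ring.
- by rewrite [LHS]R1; ring.
- by rewrite [LHS]R2; ring.
Qed.

Lemma sum_delta0 (F : fieldType) n (f : nat -> F) :
  \sum_(i < n.+1) ((i : nat) == 0%N)%:R * f i = f 0%N.
Proof.
rewrite big_ord_recl /= mul1r big1 ?addr0 // => i _.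
by rewrite /bump /= mul0r.
Qed.

Lemma sum_delta1 (F : fieldType) n (f : nat -> F) :
  \sum_(i < n.+2) ((i : nat) == 1%N)%:R * f i = f 1%N.
Proof.
rewrite !big_ord_recl /= mul0r mul1r add0r big1 ?addr0 // => i _.
by rewrite /bump /= mul0r.
Qed.

Lemma part1A p (X T : {set 'F_p}) (m lam : 'F_p) K : prime p -> (K.+4 < p)%N -> m != 0 ->
  lam != 0 -> X = T :\ 0 -> 0 \notin T -> #|T| = K.+3 ->
  (forall t, t \in T -> (m + t) ^+ K.+3 = lam) ->
  (forall x, x \in X -> x^-1 \in X) -> False.
Proof.
move=> pr Kp m0 l0 -> T0 Tc Tr XV.
have nF := natF_neq0 pr.
have X0 : 0 \notin T :\ 0 by rewrite setD11.
have cX : #|T :\ 0| = K.+3.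
  by move: Tc; rewrite (cardsD1 0) (negbTE T0) add0n.
pose c i := 'C(K.+3, i)%:R * m ^+ (K.+3 - i) - (i == 0%N)%:R * lam : 'F_p.
have cn : c K.+3 = 1 by rewrite /c binn subnn expr0 mulr1 /= mul0r subr0.
have roots : forall x, x \in T :\ 0 -> \sum_(i < K.+4) c i * x ^+ i = 0.
  move=> x; rewrite !inE => /andP [x0 xT].
  rewrite (eq_bigr (fun i : 'I_K.+4 => 'C(K.+3, i)%:R * m ^+ (K.+3 - i) * x ^+ i
              - ((i : nat) == 0%N)%:R * (lam * x ^+ i))); last by move=> i _; rewrite /c mulrBl mulrA.
  by rewrite sumrB binsum Tr // (@sum_delta0 _ _ (fun i => lam * x ^+ i)) expr0 mulr1 subrr.
have rel := from_set X0 XV cX cn roots.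
have R1 := rel 1%N isT; have R2 := rel 2%N isT.
have e0 : c 0%N = m ^+ K.+3 - lam by rewrite /c bin0 subn0 mul1r mul1r.
have e1 : c (K.+3 - 1)%N = (K.+3)%:R * m.
  by rewrite /c /= binSn (_ : (K.+3 - K.+2 = 1)%N) ?expr1 ?mul0r ?subr0 //; clear -Kp; lia.
have e1' : c 1%N = (K.+3)%:R * m ^+ K.+2 by rewrite /c bin1 /= mul0r subr0.
rewrite e1 e1' in R1.
have e2 : c (K.+3 - 2)%N = 'C(K.+3, 2)%:R * m ^+ 2.
  rewrite /c !subSS subn0 (_ : (K.+2 - K = 2)%N); last by clear -Kp; lia.
  by rewrite -(@bin_sub K.+3 2) // mul0r subr0.
have e2' : c 2%N = 'C(K.+3, 2)%:R * m ^+ K.+1 by rewrite /c /= mul0r subr0.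
rewrite e2 e2' in R2.
have C20 : 'C(K.+3, 2)%:R != 0 :> 'F_p.
  have k3 : (K.+3)%:R != 0 :> 'F_p by apply: nF => //; clear -Kp; lia.
  have k2 : (K.+2)%:R != 0 :> 'F_p by apply: nF => //; clear -Kp; lia.
  apply/eqP => C0; have := natC2 'F_p K.+1; rewrite C0 mulr0 => /eqP.
  by rewrite eq_sym mulf_eq0 (negbTE k3) (negbTE k2).
apply: (@caseA _ K m lam (c 0%N)) => //.
by apply: nF => //; clear -Kp; lia.
Qed.

Lemma part2C p (X T : {set 'F_p}) (m lam : 'F_p) K : prime p -> (K.+4 < p)%N -> m != 0 ->
  lam != 0 -> X = (- m |: T) :\ 0 -> 0 \notin T -> - m \notin T -> #|T| = K.+3 ->
  (forall t, t \in T -> (m + t) ^+ K.+3 = lam) ->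
  1 \in X -> (forall x, x \in X -> x^-1 \in X) -> False.
Proof.
move=> pr Kp m0 l0 -> T0 muT Tc Tr X1 XV.
have nF := natF_neq0 pr.
have X0 : 0 \notin (- m |: T) :\ 0 by rewrite setD11.
have cX : #|(- m |: T) :\ 0| = K.+4.
  have := cardsD1 0 (- m |: T); rewrite cardsU1 muT Tc !inE (negbTE T0) orbF.
  by rewrite eq_sym oppr_eq0 (negbTE m0).
pose c i := 'C(K.+4, i)%:R * m ^+ (K.+4 - i) - (i == 1%N)%:R * lam
   - (i == 0%N)%:R * (lam * m) : 'F_p.
have cn : c K.+4 = 1 by rewrite /c binn subnn expr0 mulr1 /= !mul0r !subr0.
have form : forall x, \sum_(i < K.+4.+1) c i * x ^+ i = (m + x) * ((m + x) ^+ K.+3 - lam).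
  move=> x.
  rewrite (eq_bigr (fun i : 'I_K.+4.+1 => 'C(K.+4, i)%:R * m ^+ (K.+4 - i) * x ^+ i
              - ((i : nat) == 1%N)%:R * (lam * x ^+ i)
              - ((i : nat) == 0%N)%:R * (lam * m * x ^+ i))); last first.
    by move=> i _; rewrite /c !mulrBl !mulrA.
  rewrite !sumrB binsum (@sum_delta1 _ _ (fun i => lam * x ^+ i))
     (@sum_delta0 _ _ (fun i => lam * m * x ^+ i)) expr0 expr1 mulr1.
  by rewrite exprS; ring.
have roots : forall x, x \in (- m |: T) :\ 0 -> \sum_(i < K.+4.+1) c i * x ^+ i = 0.
  move=> x; rewrite !inE => /andP [x0 xT]; rewrite form.
  case/orP: xT => [/eqP -> | xT]; first by rewrite addrN mul0r.
  by rewrite Tr // subrr mulr0.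
have rel := from_set X0 XV cX cn roots.
have R0 := rel 0%N isT; have R1 := rel 1%N isT; have R2 := rel 2%N isT;
  have R3 := rel 3%N isT.
have s1 := roots 1 X1; rewrite form in s1.
have e0 : c 0%N = m ^+ 4 * m ^+ K - lam * m.
  by rewrite /c /= bin0 subn0 -exprD addnC addn4; ring.
rewrite [c (K.+4 - 0)%N]cn e0 in R0.
have e1 : c (K.+4 - 1)%N = (K.+4)%:R * m.
  by rewrite /c /= binSn (_ : (K.+4 - K.+3 = 1)%N) ?expr1 ?mul0r ?subr0 //; clear -Kp; lia.
have e1' : c 1%N = (K.+4)%:R * m ^+ K.+3 - lam by rewrite /c bin1 /= mul1r mul0r subr0.
rewrite e1 e1' e0 in R1.
have e2 : c (K.+4 - 2)%N = 'C(K.+4, 2)%:R * m ^+ 2.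
  rewrite /c !subSS subn0 (_ : (K.+2 - K = 2)%N); last by clear -Kp; lia.
  by rewrite -(@bin_sub K.+4 2) // !mul0r !subr0.
have e2' : c 2%N = 'C(K.+4, 2)%:R * (m ^+ 2 * m ^+ K) by rewrite /c /= !mul0r !subr0 -exprD.
rewrite e2 e2' e0 in R2.
have k4 : (K.+4)%:R != 0 :> 'F_p by apply: nF => //; clear -Kp; lia.
have k3 : (K.+3)%:R != 0 :> 'F_p by apply: nF => //; clear -Kp; lia.
have k2 : (K.+2)%:R != 0 :> 'F_p by apply: nF => //; clear -Kp; lia.
have t2 : 2 != 0 :> 'F_p by apply: (nF 2%N) => //; clear -Kp; lia.
have t3 : 3 != 0 :> 'F_p by apply: (nF 3%N) => //; clear -Kp; lia.
have C20 : 'C(K.+4, 2)%:R != 0 :> 'F_p.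
  apply/eqP => C0; have := natC2 'F_p K.+2; rewrite C0 mulr0 => /eqP.
  by rewrite eq_sym mulf_eq0 (negbTE k4) (negbTE k3).
destruct K as [|K].
  apply: (@caseC0 _ m lam) => //.
  - by move: R1; rewrite expr0 mulr1.
  - by rewrite (_ : 6 = 'C(4,2)%:R) // [LHS]R2; ring.
  - by transitivity ((m + 1) * ((m + 1) ^+ 3 - lam)); [ring | exact: s1].
have C30 : 'C(K.+4.+1, 3)%:R != 0 :> 'F_p.
  apply/eqP => C0; have := natC3 'F_p K.+2; rewrite C0 mulr0 => /eqP.
  by rewrite eq_sym !mulf_eq0 (negbTE k4) (negbTE k3) (negbTE k2).
have e3 : c (K.+4.+1 - 3)%N = 'C(K.+4.+1, 3)%:R * m ^+ 3.
  rewrite /c !subSS subn0 (_ : (K.+3 - K = 3)%N); last by clear -Kp; lia.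
  by rewrite -(@bin_sub K.+4.+1 3) // !mul0r !subr0.
have e3' : c 3%N = 'C(K.+4.+1, 3)%:R * (m * m ^+ K.+1) by rewrite /c /= !mul0r !subr0 -exprS.
rewrite e3 e3' e0 in R3.
apply: (@caseC _ m (m ^+ K.+1) lam 'C(K.+4.+1, 2)%:R 'C(K.+4.+1, 3)%:R) => //.
by rewrite expf_neq0.
Qed.

Lemma part2D p (X T : {set 'F_p}) (m : 'F_p) K : prime p -> (K.+4 < p)%N -> m != 0 ->
  X = (- m |: T) :\ 0 -> 0 \in T -> - m \notin T -> #|T| = K.+3 ->
  (forall t, t \in T -> (m + t) ^+ K.+3 = m ^+ K.+3) ->
  1 \in X -> (forall x, x \in X -> x^-1 \in X) -> False.
Proof.
move=> pr Kp m0 -> T0 muT Tc Tr X1 XV.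
have nF := natF_neq0 pr.
have k4 : (K.+4)%:R != 0 :> 'F_p by apply: nF => //; clear -Kp; lia.
have k3 : (K.+3)%:R != 0 :> 'F_p by apply: nF => //; clear -Kp; lia.
have t2 : 2 != 0 :> 'F_p by apply: (nF 2%N) => //; clear -Kp; lia.
have X0 : 0 \notin (- m |: T) :\ 0 by rewrite setD11.
have cX : #|(- m |: T) :\ 0| = K.+3.
  have := cardsD1 0 (- m |: T); rewrite cardsU1 muT Tc !inE T0 orbT add1n.
  by move=> [].
have fz : forall x, x \in (- m |: T) :\ 0 -> (m + x) * ((m + x) ^+ K.+3 - m ^+ K.+3) = 0.
  move=> x; rewrite !inE => /andP [x0 xT].
  case/orP: xT => [/eqP -> | xT]; first by rewrite addrN mul0r.
  by rewrite Tr // subrr mulr0.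
pose c i := 'C(K.+4, i.+1)%:R * m ^+ (K.+3 - i) - (i == 0%N)%:R * m ^+ K.+3 : 'F_p.
have cn : c K.+3 = 1 by rewrite /c binn subnn expr0 mulr1 /= mul0r subr0.
have form : forall x, x * \sum_(i < K.+4) c i * x ^+ i = (m + x) * ((m + x) ^+ K.+3 - m ^+ K.+3).
  move=> x; rewrite mulr_sumr.
  rewrite (eq_bigr (fun i : 'I_K.+4 => 'C(K.+4, i.+1)%:R * m ^+ (K.+3 - i) * x ^+ i.+1
              - ((i : nat) == 0%N)%:R * (m ^+ K.+3 * x ^+ i.+1))); last first.
    by move=> i _; rewrite /c (exprS x i); ring.
  rewrite sumrB binsumS (@sum_delta0 _ _ (fun i => m ^+ K.+3 * x ^+ i.+1)) expr1.
  by rewrite !exprS; ring.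
have roots : forall x, x \in (- m |: T) :\ 0 -> \sum_(i < K.+4) c i * x ^+ i = 0.
  move=> x xX; have x0 : x != 0 by apply/eqP => e; rewrite e in xX; rewrite xX in X0.
  by apply: (mulfI x0); rewrite mulr0 form fz.
have rel := from_set X0 XV cX cn roots.
have R0 := rel 0%N isT; have R1 := rel 1%N isT; have R2 := rel 2%N isT.
have e0 : c 0%N = (K.+3)%:R * m ^+ 3 * m ^+ K.
  rewrite /c bin1 subn0 /= mul1r -mulrA -exprD addnC addn3 -natr1; ring.
rewrite [c (K.+3 - 0)%N]cn e0 in R0.
have e1 : c (K.+3 - 1)%N = ((K.+3)%:R + 1) * m.
  rewrite /c /= binSn (_ : (K.+3 - K.+2 = 1)%N) ?expr1 ?mul0r ?subr0 ?natr1 //.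
  by clear -Kp; lia.
have e1' : c 1%N = 'C(K.+4, 2)%:R * (m ^+ 2 * m ^+ K) by rewrite /c /= mul0r subr0 expS2.
rewrite e1 e1' e0 in R1.
have e2 : c (K.+3 - 2)%N = 'C(K.+4, 2)%:R * m ^+ 2.
  rewrite /c !subSS subn0 (_ : (K.+2 - K = 2)%N); last by clear -Kp; lia.
  by rewrite -(@bin_sub K.+4 2) // mul0r subr0.
have e2' : c 2%N = 'C(K.+4, 3)%:R * (m * m ^+ K) by rewrite /c /= mul0r subr0 exprS.
rewrite e2 e2' e0 in R2.
have [s2 s3] : 2 * m ^+ 2 = 1 /\ 3 * (K.+3)%:R = 4 * ((K.+3)%:R - 1) :> 'F_p.
  apply: (@caseD _ m (m ^+ K) (K.+3)%:R 'C(K.+4, 2)%:R 'C(K.+4, 3)%:R) => //.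
  - by rewrite expf_neq0.
  - by rewrite natr1.
  - by rewrite natC2 natr1.
  - rewrite natC3 natr1 (_ : (K.+3)%:R - 1 = (K.+2)%:R :> 'F_p) //.
    by rewrite -natr1 addrK.
have hk : (K.+3)%:R - 4 = 0 :> 'F_p.
  by transitivity (4 * ((K.+3)%:R - 1) - 3 * (K.+3)%:R : 'F_p); [ring | rewrite s3 subrr].
destruct K as [|[|K]].
- move: hk => /eqP; rewrite (_ : 3 - 4 = - 1 :> 'F_p); last by ring.
  by rewrite oppr_eq0 oner_eq0.
- apply: (@caseD1 _ m s2).
  have := fz 1 X1.
  by move=> <-; ring.
- move: hk; rewrite -[K.+2.+3]addn4 natsub => /eqP.
  by apply/negP; apply: nF => //; clear -Kp; lia.
Qed.

Lemma one_in p (A X : {set 'F_p}) : A \subset Fstar p -> ratio_set A = X ->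
  (0 < #|X|)%N -> 1 \in X.
Proof.
move=> AF E /card_gt0P [x xX]; rewrite -E; apply: (@ratio_one _ _ x) => //.
by rewrite E.
Qed.

Theorem theorem1p11 (p : nat) (G : {set 'F_p}) (xi mu : 'F_p) :
  prime p -> odd p ->
  is_mult_subgroup G -> G != Fstar p -> (3 <= #|G|)%N ->
  xi != 0 -> mu != 0 ->
  (forall A : {set 'F_p}, A \subset Fstar p ->
     ratio_set A != dil_shift xi mu G :\ 0) /\
  (forall A : {set 'F_p}, A \subset Fstar p ->
     ratio_set A != dil_shift xi mu (0 |: G) :\ 0).
Proof.
move=> pr oddp HG GneF k3 xi0 mu0.
have [Tc Tr muT T0] := Tfacts mu HG xi0.
have Kp : (#|G|.+1 < p)%N.
  have GF : G \subset Fstar p by case: HG.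
  have := proper_card (A := G) (B := Fstar p); rewrite properEneq GneF GF card_Fstar //.
  move=> /(_ isT); have := prime_gt0 pr; clear; lia.
have [K cK] : exists K, #|G| = K.+3 by exists (#|G| - 3)%N; clear -k3; lia.
rewrite cK in Tc Tr T0 Kp.
have Ed : dil_shift xi mu (0 |: G) = mu |: dil_shift xi mu G.
  by rewrite /dil_shift imsetU1 mulr0 add0r.
rewrite Ed.
set T := dil_shift xi mu G in Tc Tr muT T0 *.
set m := - mu in Tr T0.
have m0 : m != 0 by rewrite oppr_eq0.
have mT : - m = mu by rewrite opprK.
have l0 : xi ^+ K.+3 != 0 by rewrite expf_neq0.
split.
- move=> A AF; apply/negP => /eqP E.
  have XV : forall x, x \in T :\ 0 -> x^-1 \in T :\ 0 by rewrite -E; exact: ratio_inv.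
  case: (boolP (0 \in T)) => T0'.
  + have X1 : 1 \in T :\ 0.
      apply: (one_in AF E); have := cardsD1 0 T; rewrite Tc T0' add1n => [[<-]].
      by [].
    apply: (@part1B p (T :\ 0) T m K) => //.
    by move=> t tT; rewrite Tr // (T0 T0').
  + exact: (@part1A p (T :\ 0) T m (xi ^+ K.+3) K).
- move=> A AF; apply/negP => /eqP E.
  rewrite -mT in E muT.
  have XV : forall x, x \in (- m |: T) :\ 0 -> x^-1 \in (- m |: T) :\ 0.
    by rewrite -E; exact: ratio_inv.
  have X1 : 1 \in (- m |: T) :\ 0.
    apply: (one_in AF E); have := cardsD1 0 (- m |: T); rewrite cardsU1 muT Tc.
    by case: (0 \in _) => /= /eqP; rewrite ?add1n ?add0n ?eqSS => /eqP <-.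
  case: (boolP (0 \in T)) => T0'.
  + apply: (@part2D p ((- m |: T) :\ 0) T m K) => //.
    by move=> t tT; rewrite Tr // (T0 T0').
  + exact: (@part2C p ((- m |: T) :\ 0) T m (xi ^+ K.+3) K).
Qed.
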